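(* Assume the setting below and suppose $\tau\le0$ and $|x_k^{(1)}|>a$. Define $r_k=\lceil\log_2(|x_k^{(1)}|/a)\rceil$. Then (with probability one) the step returned by the bracketing line search at iteration $k$ is $t_k=2^{r_k}$.
   Context: Let $n\ge2$, $a\ge\sqrt{n-1}$, $f(x)=a|x^{(1)}|+\sum_{i=2}^n x^{(i)}$ on $\mathbb{R}^n$ ($x^{(i)}$ the $i$-th coordinate), $0<c_1<c_2<1$, and $\tau=c_1+\frac{(n-1)(c_1-1)}{a^2}$. The initial point $x_0$ is drawn from the normal distribution on $\mathbb{R}^n$ (independently of $a$), and $x_{k+1}=x_k+t_kd_k$, $d_k=-\nabla f(x_k)$, where $t_k$ is returned by the following Armijo–Wolfe bracketing line search: set $\alpha=0$, $\beta=+\infty$, $t=1$; repeat: if $A(t)$ fails set $\beta\leftarrow t$; else if $W(t)$ fails set $\alpha\leftarrow t$; else stop and return $t$; then if $\beta<+\infty$ set $t\leftarrow(\alpha+\beta)/2$, otherwise $t\leftarrow2\alpha$. Here $A(t)$: $f(x_k+td_k)\le f(x_k)+c_1t\nabla f(x_k)^Td_k$, and $W(t)$: $f$ is differentiable at $x_k+td_k$ and $\nabla f(x_k+td_k)^Td_k\ge c_2\nabla f(x_k)^Td_k$. All statements are understood to hold with probability one. *)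

(* Defs.v *)
From HB Require Import structures.
From mathcomp Require Import all_boot all_order all_algebra.
From mathcomp Require Import all_classical all_reals all_analysis.
Set Implicit Arguments. Unset Strict Implicit. Unset Printing Implicit Defensive.
Import Order.TTheory GRing.Theory Num.Theory.
Import numFieldNormedType.Exports.
Local Open Scope classical_set_scope.
Local Open Scope ring_scope.

Section Defs.
Variable R : realType.

(* Points of R^N are row vectors 'rV[R]_N; coordinate x^(i+1) is x 0 i. *)

Definition dotv (N : nat) (u v : 'rV[R]_N) : R := \sum_(i < N) u 0 i * v 0 i.

Definition gradv (N : nat) (f : 'rV[R]_N -> R^o) (x : 'rV[R]_N) : 'rV[R]_N :=
  \row_(i < N) ('d f x (delta_mx 0 i : 'rV[R]_N)).

Definition ftest (m : nat) (a : R) (x : 'rV[R]_m.+1) : R^o :=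
  a * `|x 0 ord0| + \sum_(i < m.+1 | i != ord0) x 0 i.

Definition armijo (N : nat) (f : 'rV[R]_N -> R^o) (c1 : R) (x d : 'rV[R]_N) (t : R) : Prop :=
  f (x + t *: d) <= f x + c1 * t * dotv (gradv f x) d.

Definition wolfe (N : nat) (f : 'rV[R]_N -> R^o) (c2 : R) (x d : 'rV[R]_N) (t : R) : Prop :=
  differentiable f (x + t *: d) /\
  dotv (gradv f (x + t *: d)) d >= c2 * dotv (gradv f x) d.

(* State (alpha, beta, t) of the bracketing line search after j passes of the
   loop; beta = None encodes beta = +oo.  If the loop already stopped, later
   states are irrelevant (see ls_returns). *)
Fixpoint ls_state (N : nat) (f : 'rV[R]_N -> R^o) (c1 c2 : R) (x d : 'rV[R]_N)
    (j : nat) : R * option R * R :=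
  match j with
  | O => (0, None, 1)
  | S j' =>
    let '(al, be, t) := ls_state f c1 c2 x d j' in
    let '(al', be') :=
      if `[< armijo f c1 x d t >] then
        (if `[< wolfe f c2 x d t >] then (al, be) else (t, be))
      else (al, Some t) in
    (al', be', match be' with Some b => (al' + b) / 2 | None => 2 * al' end)
  end.

Definition ls_trial (N : nat) (f : 'rV[R]_N -> R^o) (c1 c2 : R) (x d : 'rV[R]_N)
  (j : nat) : R := (ls_state f c1 c2 x d j).2.

Definition ls_returns (N : nat) (f : 'rV[R]_N -> R^o) (c1 c2 : R) (x d : 'rV[R]_N)
    (t : R) : Prop :=
  exists j : nat,
    [/\ armijo f c1 x d (ls_trial f c1 c2 x d j),
        wolfe f c2 x d (ls_trial f c1 c2 x d j),
        (forall i : nat, (i < j)%N ->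
           ~ (armijo f c1 x d (ls_trial f c1 c2 x d i) /\
              wolfe f c2 x d (ls_trial f c1 c2 x d i))) &
        t = ls_trial f c1 c2 x d j].

Definition gd_run (N : nat) (f : 'rV[R]_N -> R^o) (c1 c2 : R) (xs : nat -> 'rV[R]_N)
    (k : nat) : Prop :=
  forall j : nat, (j < k)%N ->
    differentiable f (xs j) /\
    exists t : R, ls_returns f c1 c2 (xs j) (- gradv f (xs j)) t /\
                  xs j.+1 = xs j + t *: (- gradv f (xs j)).

(* Null sets of the standard normal distribution N(0, I_N) on R^N: sets
   that can be covered by countably many closed boxes of arbitrarily small
   total Gaussian (product) measure, i.e. sets of Gaussian outer measure 0. *)
Definition gauss_null (N : nat) (S : set 'rV[R]_N) : Prop :=
  forall eps : R, 0 < eps ->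
  exists lo hi : nat -> 'rV[R]_N,
    S `<=` \bigcup_(j in [set: nat]) [set y | forall i : 'I_N, lo j 0 i <= y 0 i <= hi j 0 i] /\
    (\sum_(0 <= j <oo)
        (\prod_(i < N) fine (normal_prob 0 1 `[lo j 0 i, hi j 0 i]%classic))%:E < eps%:E)%E.

End Defs.

(* Main.v *)
Require Import Defs.
From HB Require Import structures.
From mathcomp Require Import all_boot all_order all_algebra.
From mathcomp Require Import all_classical all_reals all_analysis.
Import Order.TTheory GRing.Theory Num.Theory.
Import numFieldNormedType.Exports.
Local Open Scope classical_set_scope.
Local Open Scope ring_scope.
From mathcomp Require Import ring lra.

Lemma np0 (R : realType) (e : R) : fine (normal_prob 0 1 `[e, e]%classic) = 0.
Proof.
rewrite set_itv1.
have := (null_content_dominatesP _ _).1 (@normal_prob_dominates R 0 1) [set e].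
move=> ->//. exact: lebesgue_measure_set1.
Qed.

Definition dyad (R : realType) (r : R) := exists (p : int) (q : nat), r = p%:~R / 2^+q.
Arguments dyad {R}.

Lemma bad_null (R : realType) (m : nat) (a : R) :
  gauss_null [set x : 'rV[R]_m.+1 | exists r, dyad r /\ x 0 ord0 = a * r].
Proof.
move=> eps eps0.
pose box (n : nat) : R * R := match @unpickle (int * nat * nat)%type n with
  | Some (p, q, M) => (a * (p%:~R / 2^+q), M%:R) | None => (0, 0) end.
exists (fun n => \row_i (if i == ord0 then (box n).1 else - (box n).2)).
exists (fun n => \row_i (if i == ord0 then (box n).1 else (box n).2)).
split.
  move=> y [r [[p [q ->]] hy]].
  pose M := `|Num.ceil (\sum_i `|y 0 i|)|%N.
  exists (pickle (p, q, M)) => //= i; rewrite !mxE /box pickleK.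
  case: ifP => [/eqP ->|_]; first by rewrite hy lexx.
  have hS : `|y 0 i| <= (M%:R : R).
    rewrite /M natr_absz [X in _ <= X%:~R]ger0_norm; last first. rewrite ceil_ge0; apply: lt_le_trans (sumr_ge0 _ _) => //; rewrite ltrN10.
    apply: le_trans (ceil_ge _).
    by rewrite (bigD1 i) //= lerDl sumr_ge0.
  by rewrite -ler_norml.
rewrite eseries0 ?lte_fin // => j _ _.
by rewrite big_ord_recl !mxE eqxx np0 mul0r.
Qed.

Section S.
Variable R : realType.
Variable m : nat.
Variable a : R.

Definition G (s : R) : 'rV[R]_m.+1 := \row_i (if i == ord0 then a * s else 1).

Lemma lift0_neq (i : 'I_m) : (lift ord0 i == ord0) = false.
Proof. by rewrite eq_sym (negbTE (neq_lift _ _)). Qed.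

Lemma sumNZ (F : 'I_m.+1 -> R) :
  \sum_(i < m.+1 | i != ord0) F i = \sum_(i < m) F (lift ord0 i).
Proof.
by rewrite big_mkcond big_ord_recl /= add0r.
Qed.

Lemma dotG (sg s : R) : dotv (G sg) (- G s) = - (a ^+ 2 * (sg * s) + m%:R).
Proof.
rewrite /dotv big_ord_recl !mxE eqxx /=.
under eq_bigr => i _ do rewrite !mxE lift0_neq mul1r.
rewrite sumr_const card_ord mulNrn; ring.
Qed.

Lemma f_step (x : 'rV[R]_m.+1) (s t : R) :
  ftest a (x + t *: - G s) =
  a * `|x 0 ord0 - t * (a * s)| + \sum_(i < m) x 0 (lift ord0 i) - t * m%:R.
Proof.
rewrite /ftest sumNZ !mxE eqxx /=.
under eq_bigr => i _ do rewrite !mxE lift0_neq.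
rewrite big_split /= sumr_const card_ord -mulr_natr mulrN; ring.
Qed.

Lemma f_0 (x : 'rV[R]_m.+1) :
  ftest a x = a * `|x 0 ord0| + \sum_(i < m) x 0 (lift ord0 i).
Proof. by rewrite /ftest sumNZ. Qed.

Lemma step0 (x : 'rV[R]_m.+1) (s t : R) :
  (x + t *: - G s) 0 ord0 = x 0 ord0 - t * (a * s).
Proof. by rewrite !mxE eqxx mulrN. Qed.

Lemma derive_affine' (V : normedModType R) (g : V -> R^o) (y v : V) (c : R) :
  (forall h : R, g (h *: v + y) = g y + h * c) -> 'D_v g y = c.
Proof.
move=> hg; rewrite /derive.
apply: cvg_lim; first exact: norm_hausdorff.
apply: cvg_near_cst.
near=> h => /=.
have h0 : h != 0 by near: h; exact: nbhs_dnbhs_neq.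
by rewrite hg addrC addKr [_ *: _]mulrA mulVf // mul1r.
Unshelve. all: by end_near. Qed.


Lemma abs_diff (r0 : R) : r0 != 0 ->
  differentiable (fun r : R^o => (a * `|r| : R^o)) r0.
Proof.
move=> r00; apply/derivable1_diffP.
have e : \forall r \near r0, (a * Num.sg r0) *: r = (a * `|r| : R^o).
  apply/nbhs_ballP; exists `|r0|; first by rewrite /= normr_gt0.
  move=> r /=; rewrite /ball /= => hr.
  have [r0p|r0n] := ltrP 0 r0.
    have rp : 0 < r.
      have h1 := ler_norm (r0 - r); have h2 : `|r0| = r0 by rewrite gtr0_norm.
    lra.
    by rewrite gtr0_sg // gtr0_norm // mulr1.
  have r0n' : r0 < 0 by rewrite lt_neqAle r00 r0n.
  have rn : r < 0.
    have h1 := ler_norm (r - r0); rewrite distrC in h1.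
    have h2 : `|r0| = - r0 by rewrite ltr0_norm.
    lra.
  by rewrite ltr0_sg // ltr0_norm // mulrN1 [_ *: _]mulNr mulrN.
apply: (near_eq_derivable e).
apply/derivable1_diffP.
exact: ex_diff.
Qed.

Lemma f_diff (y : 'rV[R]_m.+1) : y 0 ord0 != 0 ->
  differentiable (ftest a) y.
Proof.
move=> y0.
have -> : ftest a = (fun r : R^o => (a * `|r| : R^o)) \o (fun x : 'rV[R]_m.+1 => x 0 ord0)
   + \sum_(i < m.+1 | i != ord0) (fun x : 'rV[R]_m.+1 => (x 0 i : R^o)).
  by apply/funext => x; rewrite fct_sumE.
apply: differentiableD.
  apply: differentiable_comp; first exact: differentiable_coord.
  exact: abs_diff.
elim/big_ind: _ => //.
- by move=> f g; apply: differentiableD.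
- move=> i _; exact: differentiable_coord.
Qed.

Definition Lf (s : R) (x : 'rV[R]_m.+1) : R^o :=
  a * s * x 0 ord0 + \sum_(i < m.+1 | i != ord0) x 0 i.

Lemma Lf_lin (s : R) (y v : 'rV[R]_m.+1) (h : R) :
  Lf s (h *: v + y) = Lf s y + h * Lf s v.
Proof.
rewrite /Lf !mxE mulrDr.
under eq_bigr do rewrite !mxE.
rewrite big_split /= -mulr_sumr; lra.
Qed.

Lemma abs_near (r0 : R) : r0 != 0 ->
  \forall r \near r0, (a * Num.sg r0) * r = a * `|r|.
Proof.
move=> r00.
  apply/nbhs_ballP; exists `|r0|; first by rewrite /= normr_gt0.
  move=> r /=; rewrite /ball /= => hr.
  have [r0p|r0n] := ltrP 0 r0.
    have rp : 0 < r.
      have h1 := ler_norm (r0 - r); have h2 : `|r0| = r0 by rewrite gtr0_norm.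
    lra.
    by rewrite gtr0_sg // gtr0_norm // mulr1.
  have r0n' : r0 < 0 by rewrite lt_neqAle r00 r0n.
  have rn : r < 0.
    have h1 := ler_norm (r - r0); rewrite distrC in h1.
    have h2 : `|r0| = - r0 by rewrite ltr0_norm.
    lra.
  by rewrite ltr0_sg // ltr0_norm // mulrN1 mulNr mulrN.
Qed.

Lemma f_grad (y : 'rV[R]_m.+1) : y 0 ord0 != 0 ->
  gradv (ftest a) y = \row_i (if i == ord0 then a * Num.sg (y 0 ord0) else 1).
Proof.
move=> y0; apply/rowP => i; rewrite !mxE -deriveE; last exact: f_diff.
rewrite (@near_eq_derive _ _ _ _ (Lf (Num.sg (y 0 ord0)))); last first.
  have := @coord_continuous _ 1 m.+1 0 ord0 y _ (@abs_near _ y0).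
  move=> H; near=> x.
  have hx : a * Num.sg (y 0 ord0) * x 0 ord0 = a * `|x 0 ord0| by near: x; exact: H.
  by rewrite /ftest /Lf hx.
rewrite (@derive_affine' _ _ _ _ (Lf (Num.sg (y 0 ord0)) (delta_mx 0 i))); last first.
  by move=> h; rewrite Lf_lin.
rewrite /Lf !mxE eqxx /=.
have [->|ni] := eqVneq i ord0.
  rewrite mulr1 big1 ?addr0 // => j nj; rewrite mxE /=.
  by rewrite (negbTE nj).
rewrite mulr0 add0r (bigD1 i) //= big1 ?addr0.
  by rewrite mxE !eqxx.
by move=> j /andP[_ nj]; rewrite mxE (negbTE nj).
Unshelve. all: by end_near. Qed.

Lemma f_gradG (y : 'rV[R]_m.+1) : y 0 ord0 != 0 ->
  gradv (ftest a) y = G (Num.sg (y 0 ord0)).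
Proof. exact: f_grad. Qed.

Lemma step_nz (x : 'rV[R]_m.+1) (t : R) : x 0 ord0 != 0 ->
  x 0 ord0 - t * (a * Num.sg (x 0 ord0)) = Num.sg (x 0 ord0) * (`|x 0 ord0| - t * a).
Proof. by move=> _; rewrite mulrBr mulr_sg_norm; ring. Qed.

Lemma AW_small (x : 'rV[R]_m.+1) (c1 c2 t : R) :
  0 < a -> 0 < c1 -> c1 < c2 -> c2 < 1 -> x 0 ord0 != 0 -> 0 <= t ->
  t * a < `|x 0 ord0| ->
  armijo (ftest a) c1 x (- gradv (ftest a) x) t /\
  ~ wolfe (ftest a) c2 x (- gradv (ftest a) x) t.
Proof.
move=> a0 c10 c12 c21 x0 t0 ta.
have ss : Num.sg (x 0 ord0) * Num.sg (x 0 ord0) = 1.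
  by rewrite -expr2 sqr_sg x0.
have ns : `|Num.sg (x 0 ord0)| = 1 by rewrite normr_sg x0.
have hm : 0 <= (m%:R : R) by [].
rewrite f_gradG //; split.
  rewrite /armijo f_gradG // f_step f_0 dotG ss step_nz // normrM ns mul1r gtr0_norm ?subr_gt0 //.
  have h : 0 <= t * (a ^+ 2 + m%:R) * (1 - c1).
    by apply: mulr_ge0; [apply: mulr_ge0 => //; apply: addr_ge0 => //; apply: sqr_ge0|lra].
  nra.
have nz : (x + t *: - G (Num.sg (x 0 ord0))) 0 ord0 != 0.
  by rewrite step0 step_nz // mulf_neq0 // ?sgr_eq0 // subr_eq0 gt_eqF.
rewrite /wolfe (@f_gradG x x0) (@f_gradG _ nz); case=> _.
have e1 : Num.sg (Num.sg (x 0 ord0) * (`|x 0 ord0| - t * a)) = Num.sg (x 0 ord0).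
  by rewrite sgrM sgr_id (gtr0_sg (x := _ - _)) ?mulr1 // subr_gt0.
rewrite !dotG step0 step_nz // e1 ss.
have h : 0 < (a ^+ 2 + m%:R) * (1 - c2).
  by apply: mulr_gt0; [apply: ltr_pwDl => //; apply: exprn_gt0|lra].
nra.
Qed.

Lemma AW_big (x : 'rV[R]_m.+1) (c1 c2 t : R) :
  0 < a -> 0 < c1 -> c1 < c2 -> c2 < 1 -> x 0 ord0 != 0 ->
  m%:R <= a ^+ 2 -> c1 * (a ^+ 2 + m%:R) <= m%:R ->
  `|x 0 ord0| < t * a -> t * a <= 2 * `|x 0 ord0| ->
  armijo (ftest a) c1 x (- gradv (ftest a) x) t /\
  wolfe (ftest a) c2 x (- gradv (ftest a) x) t.
Proof.
move=> a0 c10 c12 c21 x0 ma cm ta1 ta2.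
have ss : Num.sg (x 0 ord0) * Num.sg (x 0 ord0) = 1.
  by rewrite -expr2 sqr_sg x0.
have ns : `|Num.sg (x 0 ord0)| = 1 by rewrite normr_sg x0.
have hm : 0 <= (m%:R : R) by [].
have u0 : 0 <= `|x 0 ord0| by [].
have t0 : 0 <= t.
  have : 0 < t * a by apply: le_lt_trans ta1.
  by rewrite pmulr_lgt0 // => /ltW.
rewrite f_gradG //; split.
  rewrite /armijo f_gradG // f_step f_0 dotG ss step_nz // normrM ns mul1r ltr0_norm ?subr_lt0 //.
  have h1 : t * (c1 * (a ^+ 2 + m%:R)) <= t * m%:R by apply: ler_wpM2l.
  have h2 : a * (t * a) <= a * (2 * `|x 0 ord0|) by apply: ler_wpM2l => //; apply: ltW.
  nra.
have nz : (x + t *: - G (Num.sg (x 0 ord0))) 0 ord0 != 0.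
  by rewrite step0 step_nz // mulf_neq0 // ?sgr_eq0 // subr_eq0 lt_eqF.
split; first exact: f_diff.
have e1 : Num.sg (Num.sg (x 0 ord0) * (`|x 0 ord0| - t * a)) = - Num.sg (x 0 ord0).
  by rewrite sgrM sgr_id (ltr0_sg (x := _ - _)) ?mulrN1 // subr_lt0.
rewrite (@f_gradG x x0) (@f_gradG _ nz) !dotG step0 step_nz // e1 mulNr ss.
have h : 0 <= (a ^+ 2 + m%:R) * c2.
  by apply: mulr_ge0; [apply: addr_ge0 => //; apply: sqr_ge0|lra].
nra.
Qed.
End S.

Section T.
Variable R : realType.

Lemma trace (N : nat) (f : 'rV[R]_N -> R^o) c1 c2 x d (J : nat) :
  (forall i, (i < J)%N -> armijo f c1 x d (2 ^+ i) /\ ~ wolfe f c2 x d (2 ^+ i)) ->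
  forall i, (i <= J)%N -> exists al, ls_state f c1 c2 x d i = (al, None, 2 ^+ i).
Proof.
move=> H; elim=> [_|i IH iJ]; first by exists 0; rewrite expr0.
have iJ' : (i < J)%N by [].
have [al e] := IH (ltnW iJ').
have [hA hW] := H i iJ'.
exists (2 ^+ i) => /=; rewrite e (asboolT hA) (asboolF hW).
by rewrite exprS.
Qed.
Arguments trace {N f c1 c2 x d J}.

Lemma trial_pow (N : nat) (f : 'rV[R]_N -> R^o) c1 c2 x d (J : nat) :
  (forall i, (i < J)%N -> armijo f c1 x d (2 ^+ i) /\ ~ wolfe f c2 x d (2 ^+ i)) ->
  forall i, (i <= J)%N -> ls_trial f c1 c2 x d i = 2 ^+ i.
Proof. by move=> H i iJ; rewrite /ls_trial; have [al ->] := trace H i iJ. Qed.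

Lemma pow_bracket (v : R) : 1 < v -> (forall i : nat, v != 2 ^+ i) ->
  exists K : nat, 2 ^+ K < v < 2 ^+ K.+1.
Proof.
move=> v1 nv.
have ex : exists n : nat, v < 2 ^+ n.
  exists `|Num.ceil v|%N.
  apply: (le_lt_trans (ceil_ge v)).
  have c0 : (0 <= Num.ceil v)%R by rewrite ceil_ge0; lra.
  rewrite -[X in X%:~R]gez0_abs // -pmulrn.
  have := ltn_expl `|Num.ceil v|%N (ltnSn 1).
  by rewrite -(ltr_nat R) natrX.
case: (ex_minnP ex) => J hJ hmin.
case: J hJ hmin => [|K] hJ hmin; first by move: hJ; rewrite expr0; lra.
exists K; rewrite hJ andbT lt_neqAle eq_sym nv /=.
by rewrite leNgt; apply/negP => /hmin; rewrite ltnn.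
Qed.

Lemma ceil_log (v : R) (K : nat) : 2 ^+ K < v -> v <= 2 ^+ K.+1 ->
  Num.ceil (ln v / ln 2) = (K.+1)%:Z.
Proof.
move=> h1 h2.
have l2 : 0 < ln (2 : R) by apply: ln_gt0; lra.
have p2 : forall n : nat, (2 : R) ^+ n \is Num.pos by move=> n; rewrite posrE exprn_gt0.
have vp : v \is Num.pos by rewrite posrE; apply: lt_trans h1; rewrite exprn_gt0.
apply: ceil_def.
have -> : ((K.+1)%:Z - 1 = K%:Z)%R by rewrite -addn1 PoszD addrK.
apply/andP; split.
  rewrite ltr_pdivlMr //.
  have := h1; rewrite -(ltr_ln (p2 K) vp) lnXn; last lra.
  by move=> h; rewrite -[_ *+ K]mulr_natl in h.
rewrite ler_pdivrMr //.
have := h2; rewrite -(ler_ln vp (p2 K.+1)) lnXn; last lra.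
by move=> h; rewrite -[_ *+ K.+1]mulr_natl in h.
Qed.

End T.

Section D.
Variable R : realType.

Lemma dyadD (r1 r2 : R) : dyad r1 -> dyad r2 -> dyad (r1 + r2).
Proof.
move=> [p1 [q1 ->]] [p2 [q2 ->]].
exists (p1 * 2 ^+ q2 + p2 * 2 ^+ q1), (q1 + q2)%N.
have h1 : (2 : R) ^+ q1 != 0 by rewrite expf_neq0.
have h2 : (2 : R) ^+ q2 != 0 by rewrite expf_neq0.
rewrite intrD !intrM !rmorphXn /= exprD; field.
by rewrite h1 h2.
Qed.

Lemma dyadM (r1 r2 : R) : dyad r1 -> dyad r2 -> dyad (r1 * r2).
Proof.
move=> [p1 [q1 ->]] [p2 [q2 ->]].
exists (p1 * p2), (q1 + q2)%N.
have h1 : (2 : R) ^+ q1 != 0 by rewrite expf_neq0.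
have h2 : (2 : R) ^+ q2 != 0 by rewrite expf_neq0.
rewrite !intrM exprD; field.
by rewrite h1 h2.
Qed.

Lemma dyadN (r : R) : dyad r -> dyad (- r).
Proof. by move=> [p [q ->]]; exists (- p), q; rewrite mulrNz mulNr. Qed.

Lemma dyad_int (z : int) : dyad (z%:~R : R).
Proof. by exists z, 0%N; rewrite expr0 divr1. Qed.

Lemma dyad_half : dyad (2^-1 : R).
Proof. by exists 1, 1%N; rewrite expr1 mul1r. Qed.

Lemma dyad_pow (n : nat) : dyad ((2 : R) ^+ n).
Proof.
elim: n => [|n IH]; first exact: (dyad_int 1).
by rewrite exprS; apply: dyadM => //; exact: (dyad_int 2).
Qed.

Lemma dyad_sg (x : R) : dyad (Num.sg x).
Proof. by rewrite sgrEz; apply: dyad_int. Qed.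

Lemma dyad_state (N : nat) (f : 'rV[R]_N -> R^o) c1 c2 x d (j : nat) :
  let st := ls_state f c1 c2 x d j in
  [/\ dyad st.1.1, (forall b, st.1.2 = Some b -> dyad b) & dyad st.2].
Proof.
elim: j => [|j IH] /=.
  by split => //; [exact: (dyad_int 0)|exact: (dyad_int 1)].
case: (ls_state f c1 c2 x d j) IH => [[al be] t] /= [hal hbe ht].
case: (`[< armijo f c1 x d t >]); case: (`[< wolfe f c2 x d t >]) => /=.
- case: be hbe => [b|] hbe; split => //=.
    by apply: dyadM; [apply: dyadD => //; exact: hbe|exact: dyad_half].
  by apply: dyadM => //; exact: (dyad_int 2).
- case: be hbe => [b|] hbe; split => //=.
    by apply: dyadM; [apply: dyadD => //; exact: hbe|exact: dyad_half].
  by apply: dyadM => //; exact: (dyad_int 2).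
- split => //=; first by move=> b [<-].
  by apply: dyadM; [apply: dyadD|exact: dyad_half].
- split => //=; first by move=> b [<-].
  by apply: dyadM; [apply: dyadD|exact: dyad_half].
Qed.

Lemma dyad_trial (N : nat) (f : 'rV[R]_N -> R^o) c1 c2 x d (j : nat) :
  dyad (ls_trial f c1 c2 x d j).
Proof. by have [] := dyad_state N f c1 c2 x d j. Qed.

End D.

Theorem lemma3 (R : realType) (m : nat) (a c1 c2 : R) :
  (1 <= m)%N ->
  Num.sqrt (m%:R : R) <= a ->
  0 < c1 -> c1 < c2 -> c2 < 1 ->
  let f := @ftest R m a in
  let tau := c1 + (m%:R : R) * (c1 - 1) / a ^+ 2 in
  forall k : nat,
  exists Bad : set 'rV[R]_m.+1,
    gauss_null Bad /\
    forall x0 : 'rV[R]_m.+1, ~ Bad x0 ->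
    forall xs : nat -> 'rV[R]_m.+1,
      xs 0%N = x0 -> gd_run f c1 c2 xs k ->
      tau <= 0 -> a < `|xs k 0 ord0| ->
      let r := Num.ceil (ln (`|xs k 0 ord0| / a) / ln 2) in
      differentiable f (xs k) /\
      ls_returns f c1 c2 (xs k) (- gradv f (xs k)) ((2 : R) ^ r).
Proof.
move=> m1 sa c10 c12 c21 f tau k.
have s0 : 0 <= Num.sqrt (m%:R : R) by apply: sqrtr_ge0.
have s1 : 0 < Num.sqrt (m%:R : R) by rewrite sqrtr_gt0 ltr0n.
have a0 : 0 < a by apply: lt_le_trans sa.
have ma : (m%:R : R) <= a ^+ 2.
  rewrite -(sqr_sqrtr (ler0n R m)).
  have h : 0 <= (a - Num.sqrt (m%:R : R)) * (a + Num.sqrt (m%:R : R)).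
    by apply: mulr_ge0; lra.
  nra.
exists [set x : 'rV[R]_m.+1 | exists r, dyad r /\ x 0 ord0 = a * r]; split.
  exact: bad_null.
move=> x0 nb xs xs0 run tau0 big r.
have cm : c1 * (a ^+ 2 + m%:R) <= m%:R.
  have e : tau * a ^+ 2 = c1 * (a ^+ 2 + m%:R) - m%:R.
    rewrite /tau; field; by rewrite gt_eqF.
  have : tau * a ^+ 2 <= 0 by apply: mulr_le0_ge0 => //; apply: sqr_ge0.
  lra.
have inv : forall j, (j <= k)%N -> exists r0, dyad r0 /\ xs j 0 ord0 = x0 0 ord0 + a * r0.
  elim=> [_|j IH jk].
    by exists 0; split; [exact: (dyad_int R 0)|rewrite xs0 mulr0 addr0].
  have jk' : (j < k)%N by [].
  have [r0 [dr e]] := IH (ltnW jk').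
  have [dfx [t [[jj [_ _ _ tE]] ex]]] := run j jk'.
  have nz : xs j 0 ord0 != 0.
    apply/negP => /eqP h0; apply: nb; exists (- r0); split; first exact: dyadN.
    rewrite mulrN; lra.
  rewrite ex (@f_gradG R m a _ nz) (@step0 R m a).
  exists (r0 - t * Num.sg (xs j 0 ord0)); split.
    apply: dyadD => //; apply: dyadN; apply: dyadM; last exact: dyad_sg.
    by rewrite tE; apply: dyad_trial.
  rewrite e; ring.
have [rk [drk ek]] := inv k (leqnn k).
have xnz : xs k 0 ord0 != 0.
  by rewrite -normr_gt0; apply: lt_trans big.
have notpow : forall i : nat, `|xs k 0 ord0| / a != 2 ^+ i.
  move=> i; apply/negP => /eqP h; apply: nb.
  exists (Num.sg (xs k 0 ord0) * 2 ^+ i - rk); split.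
    by apply: dyadD; [apply: dyadM; [exact: dyad_sg|exact: dyad_pow]|exact: dyadN].
  have hu : `|xs k 0 ord0| = 2 ^+ i * a by rewrite -h divfK // gt_eqF.
  have hx : xs k 0 ord0 = Num.sg (xs k 0 ord0) * `|xs k 0 ord0| by rewrite mulr_sg_norm.
  rewrite hu in hx.
  have : x0 0 ord0 = xs k 0 ord0 - a * rk by rewrite ek; ring.
  by rewrite {1}hx => ->; ring.
split; first exact: f_diff.
have v1 : 1 < `|xs k 0 ord0| / a by rewrite ltr_pdivlMr // mul1r.
have [K /andP[hK1 hK2]] := @pow_bracket R _ v1 notpow.
have -> : r = (K.+1)%:Z by rewrite /r; apply: ceil_log => //; apply: ltW.
have H : forall i, (i < K.+1)%N ->
    armijo f c1 (xs k) (- gradv f (xs k)) (2 ^+ i) /\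
    ~ wolfe f c2 (xs k) (- gradv f (xs k)) (2 ^+ i).
  move=> i iK; apply: AW_small => //.
  have h1 : (2 : R) ^+ i <= 2 ^+ K.
    by rewrite ler_eXn2l ?ltr1n.
  have h2 : (2 : R) ^+ K * a < `|xs k 0 ord0| by rewrite -ltr_pdivlMr.
  have h3 : (2 : R) ^+ i * a <= 2 ^+ K * a by rewrite ler_pM2r.
  exact: le_lt_trans h3 h2.
exists K.+1; split.
- rewrite (@trial_pow R _ _ _ _ _ _ _ H _ (leqnn _)).
  have [] := @AW_big R m a (xs k) c1 c2 (2 ^+ K.+1) a0 c10 c12 c21 xnz ma cm => //.
    by rewrite -ltr_pdivrMr.
  by rewrite exprS -mulrA ler_pM2l // -ler_pdivlMr // ltW.
- rewrite (@trial_pow R _ _ _ _ _ _ _ H _ (leqnn _)).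
  have [] := @AW_big R m a (xs k) c1 c2 (2 ^+ K.+1) a0 c10 c12 c21 xnz ma cm => //.
    by rewrite -ltr_pdivrMr.
  by rewrite exprS -mulrA ler_pM2l // -ler_pdivlMr // ltW.
- move=> i iK; rewrite (@trial_pow R _ _ _ _ _ _ _ H _ (ltnW iK)).
  by have [_ hW] := H i iK; case.
- by rewrite (@trial_pow R _ _ _ _ _ _ _ H _ (leqnn _)).
Qed.
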